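(* Let $M$ be a compact connected boundaryless manifold, $X\in\mathfrak{X}^1(M)$ with flow $(X^t)_{t\in\mathbb{R}}$, and let $\Lambda=\bigcap_{t\in\mathbb{R}}X^t(U)$ be a compact isolated proper subset of $M$ with isolating neighborhood $U$. If $\Lambda$ is not future chaotic, then $\Lambda^-_X(U):=\overline{\bigcap_{t>0}X^{-t}(U)}$ has non-empty interior. Likewise, if $\Lambda$ is not past chaotic, then $\Lambda^+_X(U):=\overline{\bigcap_{t>0}X^{t}(U)}$ has non-empty interior.
   Context: $M$ carries a Riemannian metric with distance $\operatorname{dist}$. A compact $X^t$-invariant set $\Lambda$ is isolated with isolating neighborhood $U$ if $U$ is a neighborhood of $\Lambda$ with $\Lambda=\bigcap_{t\in\mathbb{R}}X^t(U)$; it is proper if $\emptyset\neq\Lambda\neq M$. An invariant set $\Lambda$ is future chaotic with constant $r>0$ if for every $x\in\Lambda$ and every neighborhood $V$ of $x$ in $M$ there exist $y\in V$ and $t>0$ with $\operatorname{dist}(X^t(y),X^t(x))\ge r$; ''future chaotic'' means future chaotic with some constant $r>0$. $\Lambda$ is past chaotic (with constant $r$) if it is future chaotic (with constant $r$) for the flow generated by $-X$. *)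

(* Defs.v *)
From HB Require Import structures.
From mathcomp Require Import all_boot all_order all_algebra.
From mathcomp Require Import all_classical all_reals all_analysis.
Set Implicit Arguments. Unset Strict Implicit. Unset Printing Implicit Defensive.
Import Order.TTheory GRing.Theory Num.Theory numFieldNormedType.Exports.
Local Open Scope classical_set_scope.
Local Open Scope ring_scope.

Definition is_flow (R : realType) (M : topologicalType) (phi : R -> M -> M) :=
  [/\ forall x, phi 0 x = x,
      forall s t x, phi (s + t) x = phi s (phi t x)
    & continuous (fun p : R * M => phi p.1 p.2)].

Definition isolated_with (R : realType) (M : topologicalType) (phi : R -> M -> M)
  (Lam U : set M) :=
  (forall x, Lam x -> nbhs x U) /\
  Lam = \bigcap_(t in [set: R]) (phi t @` U).

(* Future chaotic with constant r (dist(X^t y, X^t x) >= r written as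
   "not in the open ball of radius r"). *)
Definition future_chaotic_with (R : realType) (M : pseudoMetricType R)
  (phi : R -> M -> M) (Lam : set M) (r : R) :=
  forall x, Lam x -> forall V, nbhs x V ->
    exists y, exists t, [/\ V y, 0 < t & ~ ball (phi t x) r (phi t y)].

Definition future_chaotic (R : realType) (M : pseudoMetricType R)
  (phi : R -> M -> M) (Lam : set M) :=
  exists r, 0 < r /\ future_chaotic_with phi Lam r.

(* Past chaotic: future chaotic for the flow of -X, i.e. t |-> X^{-t}. *)
Definition past_chaotic (R : realType) (M : pseudoMetricType R)
  (phi : R -> M -> M) (Lam : set M) :=
  future_chaotic (fun t => phi (- t)) Lam.

Definition Lambda_minus (R : realType) (M : topologicalType) (phi : R -> M -> M)
  (U : set M) := closure (\bigcap_(t in [set t : R | 0 < t]) (phi (- t) @` U)).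

Definition Lambda_plus (R : realType) (M : topologicalType) (phi : R -> M -> M)
  (U : set M) := closure (\bigcap_(t in [set t : R | 0 < t]) (phi t @` U)).

(* Main.v *)
Require Import Defs.
From HB Require Import structures.
From mathcomp Require Import all_boot all_order all_algebra.
From mathcomp Require Import all_classical all_reals all_analysis.
Import Order.TTheory GRing.Theory Num.Theory numFieldNormedType.Exports.
Local Open Scope classical_set_scope.
Local Open Scope ring_scope.
Lemma unif_r (R : realType) (M : pseudoMetricType R) (Lam U : set M) :
  compact Lam -> (forall x, Lam x -> nbhs x U) ->
  exists r : R, 0 < r /\ forall z, Lam z -> ball z r `<=` U.
Proof.
move=> /compact_near_coveringP cov HU.
have H : \forall r \near (0:R)^'+, Lam `<=` (fun z => ball z r `<=` U).
  apply: (cov R (0:R)^'+ (fun r z => ball z r `<=` U)).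
  move=> x Lx; have /nbhs_ballP [e /= e0 He] := HU x Lx.
  have e20 : 0 < e / 2 by rewrite divr_gt0.
  near=> x' i => z Bz; apply: He.
  rewrite (splitr e); apply: (ball_triangle (y:=x')).
    near: x'; apply/nbhs_ballP; exists (e/2) => //.
  apply: (le_ball (e1:=i)) => //; near: i; exact: nbhs_right_le.
have [r [Lr r0]] := filter_ex (filterI H (nbhs_right_gt 0)).
by exists r; split.
Unshelve. all: end_near. Qed.

Lemma core (R : realType) (M : pseudoMetricType R) (psi : R -> M -> M)
  (Lam U : set M) (r : R) :
  (forall t x, Lam x -> Lam (psi t x)) -> 0 < r ->
  (forall z, Lam z -> ball z r `<=` U) -> ~ future_chaotic psi Lam ->
  exists (x : M) (V : set M), nbhs x V /\ forall y t, V y -> 0 < t -> U (psi t y).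
Proof.
move=> inv r0 Hr nfc.
have [x [Lx [V [nV HV]]]] : exists x : M, Lam x /\ exists V : set M, nbhs x V /\
    forall y t, V y -> 0 < t -> ball (psi t x) r (psi t y).
  apply: contrapT => hn; apply: nfc; exists r; split=> // x Lx V nV.
  apply: contrapT => hn2; apply: hn; exists x; split=> //; exists V; split=> //.
  move=> y t Vy t0; apply: contrapT => hb; apply: hn2; by exists y, t; split.
exists x, V; split=> // y t Vy t0.
exact: (Hr _ (inv t x Lx)) (HV y t Vy t0).
Qed.

Theorem lemma3p1 (R : realType) (M : pseudoMetricType R)
  (phi : R -> M -> M) (Lam U : set M) :
  hausdorff_space M ->
  compact [set: M] -> connected [set: M] ->
  is_flow phi ->
  compact Lam ->
  isolated_with phi Lam U ->
  Lam !=set0 -> Lam <> [set: M] ->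
  (~ future_chaotic phi Lam -> interior (Lambda_minus phi U) !=set0) /\
  (~ past_chaotic phi Lam -> interior (Lambda_plus phi U) !=set0).
Proof.
move=> _ _ _ [H0 H2 _] cL [HU HL] _ _.
have [r [r0 Hr]] := @unif_r R M Lam U cL HU.
have inv : forall t x, Lam x -> Lam (phi t x).
  move=> t x; rewrite HL => Hx s _.
  have [u Uu <-] := Hx (s - t) I; exists u => //.
  by rewrite -H2 addrC subrK.
split.
- move=> nfc; have [x [V [nV HV]]] := @core R M phi Lam U r inv r0 Hr nfc.
  exists x; rewrite /interior /Lambda_minus; apply: filterS nV => y Vy.
  apply: subset_closure => t /= t0; exists (phi t y); first exact: HV.
  by rewrite -H2 addNr H0.
- move=> npc.
  have inv' : forall t x, Lam x -> Lam ((fun t => phi (- t)) t x).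
    by move=> t x Lx; exact: inv.
  have [x [V [nV HV]]] := @core R M (fun t => phi (- t)) Lam U r inv' r0 Hr npc.
  exists x; rewrite /interior /Lambda_plus; apply: filterS nV => y Vy.
  apply: subset_closure => t /= t0; exists (phi (- t) y); first exact: HV.
  by rewrite -H2 addrN H0.
Qed.
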